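(* Let $b_x,b_y,u_x,u_y,K,\beta,e$ be positive constants with $u_y>u_x$ and $b_x\geq b_y+e$, and consider the system \[ \frac{dX}{dt}=\Big[b_x\Big(1-\frac{X+Y}{K}\Big)-u_x-\beta Y\Big]X+e\Big(1-\frac{X+Y}{K}\Big)Y,\qquad \frac{dY}{dt}=\Big[b_y\Big(1-\frac{X+Y}{K}\Big)-u_y+\beta X\Big]Y . \] Let $E_0=(0,0)$, $E_1=(\bar X,0)$ with $\bar X=K(1-u_x/b_x)$, and $E^*=(X^*,Y^* )$ with \[ X^*=\frac{-B+\sqrt{B^2-4AC}}{2A},\qquad Y^*=\frac{(\beta K-b_y)X^*}{b_y}+\frac{K(b_y-u_y)}{b_y}, \] where \[ A=\frac{\beta K}{b_y^2}\{b_y(b_x-b_y-e)+\beta K(b_y+e)\}, \] \[ B=-K(b_x-u_x)+K(b_x+\beta K+e)\frac{b_y-u_y}{b_y}+2eK\frac{(\beta K-b_y)(b_y-u_y)}{b_y^2}-\frac{eK(\beta K-b_y)}{b_y}, \] \[ C=-\frac{eK^2(b_y-u_y)u_y}{b_y^2}. \] Define $V_0=\frac{b_y}{b_x}\frac{u_x}{u_y}$, $H_0=\frac{\beta}{u_y}K\left(1-\frac{u_x}{b_x}\right)$ and $R_0=V_0+H_0$. Then: (i) $E_0$ is locally asymptotically stable if $b_x<u_x$ and $b_y<u_y$; (ii) if $b_x>u_x$, then $E_1$ is locally asymptotically stable when $R_0<1$ and unstable when $R_0>1$; (iii) $E^*$ is locally asymptotically stable if $b_x>u_x$, $b_y>u_y$,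 $b_y>\beta K$ and $\frac{K}{X^*}>\frac{b_y-\beta K}{b_y-u_y}$.
   Context: $X$ and $Y$ denote densities of uninfected and infected hosts; $b_x,b_y$ are birth rates, $u_x,u_y$ death rates, $K$ carrying capacity, $\beta$ the horizontal transmission coefficient, and $e$ the rate at which infected hosts produce uninfected offspring. The paper assumes throughout that $u_y>u_x$ and $b_x\geq b_y+e$. Local asymptotic stability of an equilibrium is in the usual sense for ODEs (both eigenvalues of the Jacobian at the equilibrium have negative real part). *)

(* Defs.v *)
From Stdlib Require Import Reals.
From Coquelicot Require Import Coquelicot.
Open Scope R_scope.

Definition fX (bx bY ux uy K beta e : R) (X Y : R) : R :=
  (bx * (1 - (X + Y) / K) - ux - beta * Y) * X + e * (1 - (X + Y) / K) * Y.
Definition fY (bx bY ux uy K beta e : R) (X Y : R) : R :=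
  (bY * (1 - (X + Y) / K) - uy + beta * X) * Y.

Definition mat2 := ((R * R) * (R * R))%type.

Definition jacobian (f g : R -> R -> R) (x y : R) : mat2 :=
  ((Derive (fun s => f s y) x, Derive (fun t => f x t) y),
   (Derive (fun s => g s y) x, Derive (fun t => g x t) y)).

Definition is_eigenvalue (J : mat2) (l : C) : Prop :=
  let '((a, b), (c, d)) := J in
  Cminus (Cmult (Cminus (RtoC a) l) (Cminus (RtoC d) l)) (Cmult (RtoC b) (RtoC c)) = RtoC 0.

Definition is_equilibrium (f g : R -> R -> R) (x y : R) : Prop :=
  f x y = 0 /\ g x y = 0.

Definition loc_asym_stable (f g : R -> R -> R) (x y : R) : Prop :=
  is_equilibrium f g x y /\
  forall l, is_eigenvalue (jacobian f g x y) l -> Re l < 0.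

Definition unstable (f g : R -> R -> R) (x y : R) : Prop :=
  is_equilibrium f g x y /\
  exists l, is_eigenvalue (jacobian f g x y) l /\ 0 < Re l.

Definition coefA (bx bY ux uy K beta e : R) : R :=
  beta * K / (bY ^ 2) * (bY * (bx - bY - e) + beta * K * (bY + e)).
Definition coefB (bx bY ux uy K beta e : R) : R :=
  - K * (bx - ux) + K * (bx + beta * K + e) * ((bY - uy) / bY)
  + 2 * e * K * ((beta * K - bY) * (bY - uy) / (bY ^ 2))
  - e * K * (beta * K - bY) / bY.
Definition coefC (bx bY ux uy K beta e : R) : R :=
  - (e * K ^ 2 * (bY - uy) * uy / (bY ^ 2)).

Definition Xstar (bx bY ux uy K beta e : R) : R :=
  let A := coefA bx bY ux uy K beta e in
  let B := coefB bx bY ux uy K beta e in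
  let C0 := coefC bx bY ux uy K beta e in
  (- B + sqrt (B ^ 2 - 4 * A * C0)) / (2 * A).
Definition Ystar (bx bY ux uy K beta e : R) : R :=
  (beta * K - bY) * Xstar bx bY ux uy K beta e / bY + K * (bY - uy) / bY.

Definition Xbar (bx bY ux uy K beta e : R) : R := K * (1 - ux / bx).

Definition V0 (bx bY ux uy K beta e : R) : R := (bY / bx) * (ux / uy).
Definition H0 (bx bY ux uy K beta e : R) : R := beta / uy * K * (1 - ux / bx).
Definition Rnought (bx bY ux uy K beta e : R) : R :=
  V0 bx bY ux uy K beta e + H0 bx bY ux uy K beta e.

(* Main.v *)
Require Import Defs.
From Stdlib Require Import Reals Lra Psatz.
From Coquelicot Require Import Coquelicot.
Open Scope R_scope.

Lemma jac_eq bx bY ux uy K beta e x y : K <> 0 ->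
  jacobian (fX bx bY ux uy K beta e) (fY bx bY ux uy K beta e) x y =
  ((bx * (1 - (x + y) / K) - ux - beta * y - bx * x / K - e * y / K,
    - bx * x / K - beta * x + e * (1 - (x + y) / K) - e * y / K),
   ((beta - bY / K) * y,
    bY * (1 - (x + y) / K) - uy + beta * x - bY * y / K)).
Proof.
  intros HK. unfold jacobian.
  f_equal; f_equal; apply is_derive_unique; unfold fX, fY; auto_derive; auto; field; auto.
Qed.

Lemma eig_neg a b c d : a + d < 0 -> a * d - b * c > 0 ->
  forall l, is_eigenvalue ((a, b), (c, d)) l -> Re l < 0.
Proof.
  intros Ht Hd [x y] H. unfold is_eigenvalue in H. simpl.
  pose proof (f_equal fst H) as H1. pose proof (f_equal snd H) as H2.
  simpl in H1, H2. 
  destruct (Req_dec y 0) as [->|Hy].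
  - nra.
  - assert (a + d - 2 * x = 0).
    { apply (Rmult_eq_reg_l y); [|auto]. nra. }
    lra.
Qed.

Lemma fX_star bx bY ux uy K beta e X : K <> 0 -> bY <> 0 ->
  fX bx bY ux uy K beta e X ((beta * K - bY) * X / bY + K * (bY - uy) / bY) =
  - (coefA bx bY ux uy K beta e * X ^ 2 + coefB bx bY ux uy K beta e * X
     + coefC bx bY ux uy K beta e) / K.
Proof. intros. unfold fX, coefA, coefB, coefC. field; auto. Qed.

Lemma fY_star bx bY ux uy K beta e X : K <> 0 -> bY <> 0 ->
  fY bx bY ux uy K beta e X ((beta * K - bY) * X / bY + K * (bY - uy) / bY) = 0.
Proof. intros. unfold fY. field; auto. Qed.

Theorem theorem1 (bx bY ux uy K beta e : R)
  (hbx : 0 < bx) (hbY : 0 < bY) (hux : 0 < ux) (huy : 0 < uy)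
  (hK : 0 < K) (hbeta : 0 < beta) (he : 0 < e)
  (huyux : uy > ux) (hbxe : bx >= bY + e) :
  let f := fX bx bY ux uy K beta e in
  let g := fY bx bY ux uy K beta e in
  (* (i) *)
  ((bx < ux /\ bY < uy) -> loc_asym_stable f g 0 0) /\
  (* (ii) *)
  (bx > ux ->
     (Rnought bx bY ux uy K beta e < 1 -> loc_asym_stable f g (Xbar bx bY ux uy K beta e) 0) /\
     (Rnought bx bY ux uy K beta e > 1 -> unstable f g (Xbar bx bY ux uy K beta e) 0)) /\
  (* (iii) *)
  ((bx > ux /\ bY > uy /\ bY > beta * K /\
    K / Xstar bx bY ux uy K beta e > (bY - beta * K) / (bY - uy)) ->
     loc_asym_stable f g (Xstar bx bY ux uy K beta e) (Ystar bx bY ux uy K beta e)).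
Proof.
  intros f g. assert (HK0 : K <> 0) by lra. assert (HbY0 : bY <> 0) by lra.
  unfold f, g. clear f g. split; [|split].
  - intros [H1 H2]. split.
    + unfold is_equilibrium, fX, fY; split; ring.
    + rewrite jac_eq by auto. apply eig_neg.
      * replace ((0 + 0) / K) with 0 by (field; auto). lra.
      * replace ((0 + 0) / K) with 0 by (field; auto). nra.
  - intros Hx.
    assert (Hs : 1 - (Xbar bx bY ux uy K beta e + 0) / K = ux / bx)
      by (unfold Xbar; field; split; lra).
    assert (Heq : is_equilibrium (fX bx bY ux uy K beta e) (fY bx bY ux uy K beta e)
                    (Xbar bx bY ux uy K beta e) 0).
    { unfold is_equilibrium, fX, fY. rewrite Hs. split; [|ring].
      field. lra. }
    assert (Ha11 : bx * (ux / bx) - ux - beta * 0 - bx * Xbar bx bY ux uy K beta e / K - e * 0 / K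
                   = - (bx - ux)) by (unfold Xbar; field; split; lra).
    assert (Ha22 : bY * (ux / bx) - uy + beta * Xbar bx bY ux uy K beta e - bY * 0 / K
                   = uy * (Rnought bx bY ux uy K beta e - 1))
      by (unfold Rnought, V0, H0, Xbar; field; repeat split; lra).
    split.
    + intros HR. split; [exact Heq|].
      rewrite jac_eq by auto. rewrite Hs, Ha11, Ha22. apply eig_neg.
      * nra.
      * rewrite !Rmult_0_r. assert (0 < (bx - ux) * (uy * (1 - Rnought bx bY ux uy K beta e))) by (apply Rmult_lt_0_compat; [lra|apply Rmult_lt_0_compat; lra]). lra.
    + intros HR. split; [exact Heq|].
      exists (RtoC (uy * (Rnought bx bY ux uy K beta e - 1))).
      split.
      * rewrite jac_eq by auto. rewrite Hs, Ha11, Ha22. unfold is_eigenvalue.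
        replace ((beta - bY / K) * 0) with 0 by ring.
        apply injective_projections; simpl; ring.
      * simpl. nra.
  - intros [Hx [Hy [HbK Hcond]]].
    set (X := Xstar bx bY ux uy K beta e).
    set (A := coefA bx bY ux uy K beta e).
    set (B := coefB bx bY ux uy K beta e).
    set (C0 := coefC bx bY ux uy K beta e).
    assert (HA : A > 0).
    { unfold A, coefA. apply Rmult_lt_0_compat.
      - apply Rdiv_lt_0_compat; [nra|]. nra.
      - assert (0 <= bY * (bx - bY - e)) by (apply Rmult_le_pos; lra). assert (0 < beta * K) by nra. assert (0 < beta * K * (bY + e)) by (apply Rmult_lt_0_compat; lra). lra. }
    assert (HC : C0 < 0).
    { unfold C0, coefC. apply Ropp_lt_gt_0_contravar. apply Rdiv_lt_0_compat; [|nra].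
      assert (0 < e * K ^ 2) by (apply Rmult_lt_0_compat; [lra|apply pow_lt; lra]). assert (0 < e * K ^ 2 * (bY - uy)) by (apply Rmult_lt_0_compat; lra). apply Rmult_lt_0_compat; lra. }
    assert (Hroot : A * X ^ 2 + B * X + C0 = 0).
    { assert (HD : 0 <= B ^ 2 - 4 * A * C0) by nra.
      pose proof (sqrt_sqrt _ HD) as Hsq.
      unfold X, Xstar. fold A B C0.
      set (sq := sqrt (B ^ 2 - 4 * A * C0)) in *.
      field_simplify; [|lra]. replace (sq ^ 2) with (sq * sq) by ring. rewrite Hsq. field. lra. }
    assert (Hr : (bY - beta * K) / (bY - uy) > 0) by (apply Rdiv_lt_0_compat; lra).
    assert (HX : X > 0).
    { fold X in Hcond. destruct (Rle_or_lt X 0) as [H|H]; [|exact H].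
      destruct (Req_dec X 0) as [H0|H0].
      - rewrite H0 in Hcond. unfold Rdiv in Hcond. rewrite Rinv_0, Rmult_0_r in Hcond. lra.
      - assert (K / X < 0). { apply Rdiv_pos_neg; lra. } lra. }
    set (Y := Ystar bx bY ux uy K beta e).
    assert (HYdef : Y = (beta * K - bY) * X / bY + K * (bY - uy) / bY) by reflexivity.
    assert (HY : Y > 0).
    { fold X in Hcond. apply Rlt_gt in Hcond.
      assert (H1 : K > (bY - beta * K) / (bY - uy) * X).
      { apply (Rmult_lt_reg_r (/ X)). apply Rinv_0_lt_compat; lra.
        rewrite Rmult_assoc, Rinv_r by lra. rewrite Rmult_1_r. exact Hcond. }
      assert (H2 : K * (bY - uy) > (bY - beta * K) * X).
      { unfold Rdiv in H1. 
        assert (H3 : (bY - uy) * K > (bY - uy) * ((bY - beta * K) * / (bY - uy) * X))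
          by (apply Rmult_lt_compat_l; lra).
        replace ((bY - uy) * ((bY - beta * K) * / (bY - uy) * X)) with ((bY - beta * K) * X) in H3
          by (field; lra). lra. }
      rewrite HYdef. unfold Rdiv.
      apply Rmult_lt_reg_r with bY; [lra|]. rewrite Rmult_0_l.
      replace (((beta * K - bY) * X * / bY + K * (bY - uy) * / bY) * bY) with
        (K * (bY - uy) - (bY - beta * K) * X) by (field; lra). lra. }
    assert (HfX : fX bx bY ux uy K beta e X Y = 0).
    { rewrite HYdef, fX_star by auto. fold A B C0. rewrite Hroot. field; auto. }
    assert (HfY : fY bx bY ux uy K beta e X Y = 0).
    { rewrite HYdef, fY_star by auto. reflexivity. }
    split; [split; assumption|].
    fold X Y. rewrite jac_eq by auto.
    unfold fX, fY in HfX, HfY.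
    set (s := 1 - (X + Y) / K) in *.
    assert (HYK : 0 < Y / K) by (apply Rdiv_lt_0_compat; lra).
    assert (HXK : 0 < X / K) by (apply Rdiv_lt_0_compat; lra).
    assert (Hspos : s > 0).
    { destruct (Rle_or_lt s 0) as [H|H]; [|exact H].
      exfalso. assert (bx * s <= 0) by (rewrite <- (Rmult_0_r bx); apply Rmult_le_compat_l; lra).
      assert (0 < beta * Y) by (apply Rmult_lt_0_compat; lra).
      assert ((bx * s - ux - beta * Y) * X < 0) by (rewrite <- (Rmult_0_l X); apply Rmult_lt_compat_r; lra).
      assert (e * s <= 0) by (rewrite <- (Rmult_0_r e); apply Rmult_le_compat_l; lra).
      assert (e * s * Y <= 0) by (rewrite <- (Rmult_0_l Y); apply Rmult_le_compat_r; lra).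
      lra. }
    assert (Ha22 : bY * s - uy + beta * X - bY * Y / K = - bY * (Y / K)).
    { assert (Hf : bY * s - uy + beta * X = 0).
      { apply (Rmult_eq_reg_r Y); lra. }
      unfold Rdiv. rewrite Hf. ring. }
    assert (Ha11 : bx * s - ux - beta * Y - bx * X / K - e * Y / K
                   = - e * s * Y / X - bx * (X / K) - e * (Y / K)).
    { assert (Hf : bx * s - ux - beta * Y = - e * s * Y / X).
      { apply (Rmult_eq_reg_r X); [|lra]. unfold Rdiv. field_simplify; lra. }
      rewrite Hf. unfold Rdiv. ring. }
    rewrite Ha22, Ha11. apply eig_neg.
    + assert (0 < e * s * Y) by (apply Rmult_lt_0_compat; [apply Rmult_lt_0_compat|]; lra).
      assert (0 < e * s * Y / X) by (apply Rdiv_lt_0_compat; lra).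
      assert (0 < bx * (X / K)) by (apply Rmult_lt_0_compat; lra).
      assert (0 < e * (Y / K)) by (apply Rmult_lt_0_compat; lra).
      assert (0 < bY * (Y / K)) by (apply Rmult_lt_0_compat; lra).
      lra.
    + set (p := X / K) in *. set (q := Y / K) in *.
      assert (HbKK : beta - bY / K = - (bY - beta * K) * / K) by (field; auto).
      assert (Hk : / K > 0) by (apply Rinv_0_lt_compat; lra).
      replace ((- e * s * Y / X - bx * p - e * q) * (- bY * q)
               - (- bx * X / K - beta * X + e * s - e * Y / K) * ((beta - bY / K) * Y))
        with (q * (bY * e * s * Y / X + beta * X * (bx - bY + beta * K) + beta * e * Y
                   + (bY - beta * K) * e * s)).
      2:{ unfold p, q. field. split; lra. }
      apply Rmult_lt_0_compat; [lra|].
      assert (0 < bY * e * s * Y / X) by (apply Rdiv_lt_0_compat; [repeat apply Rmult_lt_0_compat|]; lra).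
      assert (0 < beta * K) by (apply Rmult_lt_0_compat; lra).
      assert (0 < beta * X * (bx - bY + beta * K)) by (apply Rmult_lt_0_compat; [apply Rmult_lt_0_compat|]; lra).
      assert (0 < beta * e * Y) by (repeat apply Rmult_lt_0_compat; lra).
      assert (0 < (bY - beta * K) * e * s) by (repeat apply Rmult_lt_0_compat; lra).
      lra.
Qed.
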